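(* Let $u$ be a word of length $n\ge1$. If $\mathrm{per}(u)<n$ then $\mathrm{lseedmax}(u)=n-1$; otherwise $\mathrm{lseedmax}(u)=0$.
   Context: For a nonempty word $x$, $\mathrm{per}(x)$ is the smallest positive integer $p$ with $x_i=x_{i+p}$ for all $1\le i\le|x|-p$. A word $s$ covers $w$ if every position of $w$ lies in some occurrence of $s$ in $w$. A seed of $u$ is a factor $s$ of $u$ such that $u$ is a factor of some word covered by $s$; a left seed is a seed that is a prefix of $u$. $\mathrm{lseedmax}(u)$ is the length of the longest left seed of $u$ that is shorter than $u$, or $0$ if there is none. *)

(* Defs.v *)
From mathcomp Require Import all_boot.
From mathcomp Require Import boolp.
Set Implicit Arguments. Unset Strict Implicit. Unset Printing Implicit Defensive.

Section Words.
Variable T : eqType.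
Implicit Types x s u w : seq T.

Definition is_period x (p : nat) : bool :=
  (0 < p) && all (fun i => onth x i == onth x (i + p)) (iota 0 (size x - p)).

(* per x = smallest positive period (searching p = 1 .. |x|; |x| is always a
   period, so for nonempty x this is the true minimum). *)
Definition per x : nat := (find (is_period x) (iota 1 (size x))).+1.

Definition occurs_at s w (i : nat) : Prop :=
  i + size s <= size w /\ take (size s) (drop i w) = s.

Definition covers s w : Prop :=
  forall j, j < size w -> exists i, occurs_at s w i /\ i <= j < i + size s.

Definition is_seed s u : Prop :=
  infix s u /\ exists w, covers s w /\ infix u w.

Definition is_left_seed s u : Prop := is_seed s u /\ prefix s u.

(* length of the longest left seed of u shorter than u, or 0 if none;
   a left seed of length k is necessarily take k u *)
Definition lseedmax u : nat :=
  \max_(k < size u | `[< is_left_seed (take k u) u >]) k.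

End Words.

(* Main.v *)
Require Import Defs.
From mathcomp Require Import all_boot.
From mathcomp Require Import boolp.
From mathcomp Require Import zify.

Section Aux.
Variable T : eqType.

Lemma onth_some (x0 : T) (s : seq T) i : i < size s -> onth s i = Some (nth x0 s i).
Proof. by move=> hi; rewrite onthE (nth_map x0). Qed.

Lemma period_nth (x0 : T) (u : seq T) p : is_period u p ->
  forall i, i + p < size u -> nth x0 u i = nth x0 u (i + p).
Proof.
case/andP=> _ /allP H i hi.
have := H i; rewrite mem_iota add0n => /(_ ltac:(apply/andP; split; lia)).
rewrite (onth_some x0) ?(onth_some x0); try lia.
by move/eqP=> [].
Qed.

Lemma nth_period (x0 : T) (u : seq T) p : 0 < p ->
  (forall i, i + p < size u -> nth x0 u i = nth x0 u (i + p)) -> is_period u p.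
Proof.
move=> hp H; apply/andP; split => //; apply/allP => i.
rewrite mem_iota add0n => /andP [_ hi].
rewrite (onth_some x0) ?(onth_some x0); try lia.
by rewrite H //; lia.
Qed.

Lemma per_le (u : seq T) d : 0 < d <= size u -> is_period u d -> per u <= d.
Proof.
move=> /andP [h1 h2] hp; rewrite /per.
case: (leqP (find (is_period u) (iota 1 (size u))) d.-1) => h; first lia.
have := before_find 0 h; rewrite nth_iota; last lia.
by rewrite (_ : 1 + d.-1 = d) ?hp //; lia.
Qed.

Lemma per_period (u : seq T) : per u < size u -> is_period u (per u).
Proof.
rewrite /per => h.
have hh : has (is_period u) (iota 1 (size u)) by rewrite has_find size_iota; lia.
have := nth_find 0 hh; rewrite nth_iota; last first.
  by move: hh; rewrite has_find size_iota.
by rewrite add1n.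
Qed.

End Aux.

Theorem lemma3 (T : eqType) (u : seq T) (n : nat) :
  size u = n -> 1 <= n ->
  (per u < n -> lseedmax u = n - 1) /\ (~ (per u < n) -> lseedmax u = 0).
Proof.
move=> hn n1.
have [x0 _] : exists x0 : T, True by case: u hn n1 => [|x u'] /=; [lia | exists x].
have per_pos : 0 < per u by rewrite /per.
split.
- move=> hp.
  set p := per u.
  have P := @period_nth T x0 _ _ (@per_period T u ltac:(rewrite hn; exact hp)).
  set s := take (n - 1) u.
  have hs : size s = n - 1 by rewrite size_take_min ?hn; lia.
  set w := take p u ++ s.
  have hw : size w = p + (n - 1) by rewrite size_cat hs size_take_min ?hn; lia.
  have nw : forall i, i < n -> nth x0 w i = nth x0 u i.
    move=> i hi; rewrite nth_cat size_take_min ?hn (_ : minn p n = p); last lia.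
    case: ifP => hip.
      by rewrite nth_take //; lia.
    rewrite nth_take; last lia.
    have := P (i - p) ltac:(lia).
    by rewrite -/p (_ : i - p + p = i) //; lia.
  have tw : take n w = u.
    apply: (eq_from_nth (x0 := x0)); first by rewrite size_take_min ?hn; lia.
    by move=> i; rewrite size_take_min ?hn => hi; rewrite nth_take; [rewrite nw //|]; lia.
  have seed : is_left_seed (take (n - 1) u) u.
    split; last exact: prefix_take.
    split.
      exact: infix_take.
    exists w; split.
      move=> j; rewrite hw => hj.
      case: (ltnP j (n - 1)) => hj'.
        exists 0; split; last by rewrite add0n; rewrite size_take_min ?hn; lia.
        split; first by rewrite add0n size_take_min ?hn hw; lia.
        rewrite drop0 size_take_min ?hn (_ : minn (n-1) n = n - 1); last lia.
        by rewrite -tw take_takel //; lia.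
      exists p; split; last by rewrite size_take_min ?hn; lia.
      split; first by rewrite size_take_min ?hn hw; lia.
      rewrite -/s hs (_ : p = size (take p u)); last by rewrite size_take_min ?hn; lia.
      by rewrite drop_size_cat // -hs take_size.
    apply/infixP; exists [::], (drop n w); by rewrite /= -{1}(cat_take_drop n w) tw.
  apply/eqP; rewrite eqn_leq; apply/andP; split.
    apply/bigmax_leqP => i _; have := ltn_ord i; lia.
  have hi : n - 1 < size u by lia.
  exact: (leq_bigmax_cond (Ordinal hi) (asboolT seed)).
- move=> hp; rewrite /lseedmax big_pred0 // => k /=.
  apply: asboolF => -[[_ [w [cov /infixP [a' [b' ew]]]]] _].
  apply: hp.
  set a := size a'.
  set s := take k u.
  have hk : size s = k by rewrite size_take_min ?hn; have := ltn_ord k; lia.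
  have nwu : forall m, m < n -> nth x0 w (a + m) = nth x0 u m.
    move=> m hm; rewrite ew nth_cat ifF; last lia.
    by rewrite nth_cat ifT; [rewrite (_ : a + m - a = m) //|]; lia.
  have hsw : size w = a + n + size b' by rewrite ew !size_cat hn; lia.
  have [i [[oi1 oi2] /andP [ij1 ij2]]] := cov (a + n - 1) ltac:(lia).
  rewrite hk in oi1 oi2 ij2.
  have kn := ltn_ord k.
  have dpos : a < i by lia.
  have Hd : is_period u (i - a).
    apply: (@nth_period T x0); first lia.
    move=> t ht.
    have ht' : t < k by lia.
    rewrite -(nwu t) ?(_ : a + (t + (i - a)) = i + t); try lia.
    rewrite -(nwu (t + (i - a))); last lia.
    rewrite (_ : a + (t + (i - a)) = i + t); last lia.
    have := congr1 (fun z => nth x0 z t) oi2.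
    rewrite nth_take // nth_drop /s nth_take // => ->.
    by rewrite -(nwu t) //; lia.
  have := @per_le T u (i - a) ltac:(apply/andP; split; lia) Hd; lia.
Qed.
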